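(* Let $p>q>1$ be relatively prime integers, let $\mathbf{x}$ be a sequence over a finite alphabet $B$, and let the tree $T(L_{\frac pq})$ be decorated by $\mathbf{x}$. If there exists some $h\ge0$ such that each factor in $F_h^\infty$ can be extended to at most one factor in $F^\infty_{h+1,w_{j,0}}$ for every $0\le j\le q-1$, then $\mathbf{x}$ is $\frac pq$-automatic.
   Context: $A_p=\{0,\ldots,p-1\}$; for $w=w_\ell\cdots w_0\in A_p^*$, $\mathrm{val}_{\frac pq}(w)=\sum_{i=0}^{\ell}\frac{w_i}{q}(\frac pq)^i$; $\mathrm{rep}_{\frac pq}(n)$ is the unique word not starting with $0$ of value $n$ ($\mathrm{rep}_{\frac pq}(0)=\varepsilon$); $L_{\frac pq}=\{\mathrm{rep}_{\frac pq}(n):n\ge0\}$. $\mathbf{x}$ is $\frac pq$-automatic if there is a deterministic finite automaton with output $(Q,q_0,A_p,\delta,\tau:Q\to B)$ with $x_n=\tau(\delta(q_0,\mathrm{rep}_{\frac pq}(n)))$ for all $n$. $T(L_{\frac pq})$ is the tree whose nodes are the words of $L_{\frac pq}$, with an edge labeled $d$ from $w$ to $wd$ whenever both are in $L_{\frac pq}$; node $w$ is decorated by $x_{\mathrm{val}_{\frac pq}(w)}$. For $w\in L_{\frac pq}$, the factor $T[w,h]$ has domain $w^{-1}L_{\frac pq}\cap A_p^{\le h}$ (where $w^{-1}L=\{u:wu\in L\}$), with node $u$ decorated by $x_{\mathrm{val}_{\frac pq}(wu)}$; two factors of the same height are equal if they have the same domain and same decorations. $F_h^\infty$ is the set of factors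 of height $h$ equal to $T[w,h]$ for infinitely many $w$; $F^\infty_{h,a}$ is the set of those in $F_h^\infty$ whose radix-least word of length $h$ in the domain ends with the letter $a$. A factor $U$ of height $h$ is extended to a factor $U'$ of height $h+1$ if the truncation of $U'$ to words of length at most $h$ equals $U$. For $0\le j\le q-1$, $w_j$ is the word listing in increasing order the letters $a\in A_p$ with $a\equiv -pj\pmod q$, and $w_{j,0}$ is its first letter. *)

(* Defs.v *)
From mathcomp Require Import all_boot all_order all_algebra.
Set Implicit Arguments. Unset Strict Implicit. Unset Printing Implicit Defensive.
Import Order.TTheory GRing.Theory Num.Theory.

(* Words over A_p = {0,...,p-1} are represented as [seq nat], written
   most significant letter first: the word w_l ... w_0 is [:: w_l; ...; w_0]. *)

Definition valQ (p q : nat) (w : seq nat) : rat :=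
  (\sum_(i < size w)
     ((nth 0%N (rev w) i)%:R / q%:R) * (p%:R / q%:R) ^+ i)%R.

(* natural-number reading of the value (exact for words of L_{p/q}) *)
Definition val_nat (p q : nat) (w : seq nat) : nat := absz (numq (valQ p q w)).

(* rep_{p/q}(n): the standard greedy algorithm  q n = p m + a, a in A_p,
   rep(n) = rep(m) a, rep(0) = epsilon.  Since q < p, m < n for n > 0, so
   fuel n suffices. *)
Fixpoint rep_fuel (p q k n : nat) : seq nat :=
  match k with
  | 0 => [::]
  | k'.+1 => if n == 0 then [::]
             else rcons (rep_fuel p q k' ((q * n) %/ p)) ((q * n) %% p)
  end.

Definition rep (p q n : nat) : seq nat := rep_fuel p q n n.

Definition inL (p q : nat) (w : seq nat) : bool := rep p q (val_nat p q w) == w.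

(* A factor of height h is represented as a map from words to [option B]:
   None outside the domain, Some b for a node decorated by b. *)
Definition factor (B : Type) := seq nat -> option B.

Definition Tfac (B : Type) (p q : nat) (x : nat -> B) (w : seq nat) (h : nat)
  : factor B :=
  fun u => if (size u <= h) && inL p q (w ++ u)
           then Some (x (val_nat p q (w ++ u))) else None.

Definition factor_eq (B : Type) (U V : factor B) : Prop := forall u, U u = V u.

(* U in F_h^infty: U = T[w,h] for infinitely many w in L_{p/q}
   (the words of L are exactly rep n, n : nat, and rep is injective). *)
Definition Finf (B : Type) (p q : nat) (x : nat -> B) (h : nat) (U : factor B)
  : Prop :=
  forall n0 : nat, exists n : nat, (n0 <= n)%N /\ factor_eq U (Tfac p q x (rep p q n) h).

(* radix (= lexicographic, for words of equal length) order *)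
Fixpoint lexle (u v : seq nat) : bool :=
  match u, v with
  | [::], _ => true
  | _ :: _, [::] => false
  | a :: u', b :: v' => (a < b) || ((a == b) && lexle u' v')
  end.

Definition radix_least_h (B : Type) (U : factor B) (h : nat) (u : seq nat) : Prop :=
  size u = h /\ U u <> None /\
  forall v, size v = h -> U v <> None -> lexle u v.

Definition Finf_a (B : Type) (p q : nat) (x : nat -> B) (h a : nat)
  (U : factor B) : Prop :=
  Finf p q x h U /\
  exists u, radix_least_h U h u /\ u <> [::] /\ last 0%N u = a.

Definition extends (B : Type) (h : nat) (U U' : factor B) : Prop :=
  forall u, (size u <= h)%N -> U' u = U u.

Definition wj0 (p q j : nat) : nat :=
  head 0%N [seq a <- iota 0 p | (a + p * j) %% q == 0].

Definition automatic (B : Type) (p q : nat) (x : nat -> B) : Prop :=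
  exists (Q : finType) (q0 : Q) (delta : Q -> nat -> Q) (tau : Q -> B),
    forall n, x n = tau (foldl delta q0 (rep p q n)).

(* Main.v *)
Require Import Defs.
From mathcomp Require Import all_boot all_order all_algebra.
From mathcomp Require Import ring zify.
From Stdlib Require Import Classical ClassicalEpsilon.
Set Implicit Arguments. Unset Strict Implicit. Unset Printing Implicit Defensive.
Import Order.TTheory GRing.Theory Num.Theory.

Section Lang.
Variables p q : nat.
Hypothesis hq : (1 < q)%N.
Hypothesis hqp : (q < p)%N.

Lemma p_gt0 : (0 < p)%N. Proof. exact: (leq_trans _ hqp). Qed.
Lemma q_gt0 : (0 < q)%N. Proof. by apply: ltnW. Qed.

Lemma rep_fuel_eq k1 k2 n : (n <= k1)%N -> (n <= k2)%N ->
  rep_fuel p q k1 n = rep_fuel p q k2 n.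
Proof.
elim: k1 k2 n => [|k1 IH] [|k2] n /=.
- by [].
- by rewrite leqn0 => /eqP -> .
- by rewrite leqn0 => _ /eqP ->.
- move=> h1 h2; case: eqP => // /eqP n0.
  have lt : (q * n %/ p < n)%N.
    by rewrite ltn_divLR ?p_gt0 // mulnC ltn_pmul2l ?lt0n.
  by rewrite (IH k2) // -ltnS; apply: leq_trans lt _.
Qed.

Lemma rep0 : rep p q 0 = [::]. Proof. by []. Qed.

Lemma repS n : (0 < n)%N ->
  rep p q n = rcons (rep p q (q * n %/ p)) (q * n %% p).
Proof.
case: n => // n _; rewrite /rep /=.
congr rcons; apply: rep_fuel_eq => //.
by rewrite -ltnS ltn_divLR ?p_gt0 // mulnC ltn_pmul2l.
Qed.

Lemma valQ_rcons w a :
  valQ p q (rcons w a) = ((p%:R / q%:R) * valQ p q w + a%:R / q%:R)%R.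
Proof.
rewrite /valQ size_rcons big_ord_recl rev_rcons /= expr0 mulr1 addrC.
congr (_ + _)%R; rewrite mulr_sumr; apply: eq_bigr => i _.
by rewrite /bump /= add0n exprS; ring.
Qed.

Lemma valQ_rep n : valQ p q (rep p q n) = (n%:R)%R.
Proof.
elim: n {-2}n (leqnn n) => [|N IH] n.
  by rewrite leqn0 => /eqP ->; rewrite rep0 /valQ big_ord0.
case: n => [|n] hn; first by rewrite rep0 /valQ big_ord0.
rewrite repS // valQ_rcons IH; last first.
  by rewrite -ltnS; apply: leq_trans hn; rewrite ltn_divLR ?p_gt0 // mulnC ltn_pmul2l.
have qn0 : (q%:R : rat) != 0%R by rewrite pnatr_eq0 -lt0n q_gt0.
have e := divn_eq (q * n.+1) p.
apply: (mulIf qn0).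
set m := (q * n.+1) %/ p in e *; set r := (q * n.+1) %% p in e *.
rewrite -natrM (mulnC n.+1 q) e natrD natrM; field; done.
Qed.

Lemma val_nat_rep n : val_nat p q (rep p q n) = n.
Proof. by rewrite /val_nat valQ_rep -[(n%:R)%R]/(((n%:Z)%:Q)%R) numq_int. Qed.

Lemma rep_inj m n : rep p q m = rep p q n -> m = n.
Proof. by move=> e; rewrite -(val_nat_rep m) e val_nat_rep. Qed.

Lemma inLP w : inL p q w <-> exists n, w = rep p q n.
Proof.
split; first by move=> /eqP <-; eauto.
by case=> n ->; rewrite /inL val_nat_rep.
Qed.

Lemma inL_rep n : inL p q (rep p q n).
Proof. by apply/inLP; eauto. Qed.

Lemma rep_child n a m :
  rcons (rep p q n) a = rep p q m <-> [/\ (0 < m)%N, q * m = p * n + a & (a < p)%N].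
Proof.
split.
- case: m => [|m]; first by rewrite rep0; case: (rep p q n).
  rewrite [rep p q m.+1]repS // => /rcons_inj [/rep_inj e ->]. split => //.
    by rewrite {1}(divn_eq (q * m.+1) p) e mulnC.
  by rewrite ltn_mod p_gt0.
- case=> m0 e ap; rewrite (repS m0) e.
  rewrite (mulnC p) divnMDl ?p_gt0 // modnMDl divn_small // modn_small //.
  by rewrite addn0.
Qed.

Lemma inL_rcons w a : inL p q (rcons w a) -> inL p q w.
Proof.
case/inLP=> m e; case: m e => [|m]; first by rewrite rep0; case: w.
by rewrite repS // => /rcons_inj [-> _]; apply: inL_rep.
Qed.

Lemma inL_cat w u : inL p q (w ++ u) -> inL p q w.
Proof.
elim/last_ind: u => [|u a IH]; first by rewrite cats0.
by rewrite -rcons_cat => /inL_rcons.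
Qed.

Lemma inL_child w a : inL p q w ->
  inL p q (rcons w a) <->
  [/\ (a < p)%N, q %| p * val_nat p q w + a & (0 < p * val_nat p q w + a)%N].
Proof.
case/inLP=> n ->; rewrite val_nat_rep; split.
- case/inLP=> m /rep_child [m0 e ap]; split => //.
    by rewrite -e dvdn_mulr.
  by rewrite -e muln_gt0 q_gt0.
- case=> ap dv pos; apply/inLP; exists ((p * n + a) %/ q).
  apply/rep_child; rewrite [q * _]mulnC divnK //; split => //.
  by rewrite divn_gt0 ?q_gt0 // dvdn_leq.
Qed.

Lemma val_child w a : inL p q (rcons w a) ->
  q * val_nat p q (rcons w a) = p * val_nat p q w + a.
Proof.
move=> h; have hw := inL_rcons h.
case/inLP: hw h => n -> /inLP [m e].
by rewrite e !val_nat_rep; case/rep_child: e.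
Qed.

Lemma val_pos w : inL p q w -> w <> [::] -> (0 < val_nat p q w)%N.
Proof. by case/inLP => n ->; rewrite val_nat_rep; case: n. Qed.

Lemma val_child_gt w a : inL p q (rcons w a) -> (0 < val_nat p q w)%N ->
  (val_nat p q w < val_nat p q (rcons w a))%N.
Proof.
move=> h pos; have e := val_child h.
rewrite -(ltn_pmul2l q_gt0) e.
apply: (@leq_trans (p * val_nat p q w)); last exact: leq_addr.
by rewrite ltn_pmul2r.
Qed.

Lemma letters_rep n : all (fun a => a < p)%N (rep p q n).
Proof.
elim: n {-2}n (leqnn n) => [|N IH] n; first by rewrite leqn0 => /eqP ->.
case: n => [|n] hn //.
rewrite repS // all_rcons ltn_mod p_gt0 /= IH //.
by rewrite -ltnS; apply: leq_trans hn; rewrite ltn_divLR ?p_gt0 // mulnC ltn_pmul2l.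
Qed.

Lemma letters_inL w : inL p q w -> all (fun a => a < p)%N w.
Proof. by case/inLP=> n ->; apply: letters_rep. Qed.



Lemma lexle_refl u : lexle u u.
Proof. by elim: u => //= a u ->; rewrite eqxx ltnn. Qed.

Lemma lexle_trans u v w : lexle u v -> lexle v w -> lexle u w.
Proof.
elim: u v w => [|a u IH] [|b v] [|c w] //=.
case/orP=> [ab|/andP[/eqP <- uv]] /orP [bc|/andP [/eqP <- vw]].
- by rewrite (ltn_trans ab bc).
- by rewrite ab.
- by rewrite bc.
- by rewrite eqxx (IH _ _ uv vw) orbT.
Qed.

Lemma lexle_total u v : lexle u v || lexle v u.
Proof.
elim: u v => [|a u IH] [|b v] //=.
case: (ltngtP a b) => //= ->; by rewrite eqxx.
Qed.

Lemma lexle_rcons s a b : lexle (rcons s a) (rcons s b) = (a <= b)%N.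
Proof.
elim: s => [|c s IH] /=; last by rewrite ltnn eqxx.
by case: ltngtP. Qed.

Lemma lex_min (s : seq (seq nat)) : s != [::] ->
  exists2 r, r \in s & forall v, v \in s -> lexle r v.
Proof.
elim: s => [|a s IH] //= _.
case: (eqVneq s [::]) => [->|sn].
  by exists a; rewrite ?mem_seq1 // => v; rewrite mem_seq1 => /eqP ->; apply: lexle_refl.
case: (IH sn) => r rs rmin.
case/orP: (lexle_total a r) => ar.
  exists a; first by rewrite mem_head.
  move=> v; rewrite in_cons => /orP [/eqP ->|vs]; first exact: lexle_refl.
  exact: lexle_trans ar (rmin _ vs).
exists r; first by rewrite in_cons rs orbT.
by move=> v; rewrite in_cons => /orP [/eqP ->|vs] //; apply: rmin.
Qed.

Fixpoint allw (k : nat) : seq (seq nat) :=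
  if k is k'.+1 then [::] :: [seq a :: u | a <- iota 0 p, u <- allw k']
  else [:: [::]].

Lemma mem_allw k u : (size u <= k)%N -> all (fun a => a < p)%N u -> u \in allw k.
Proof.
elim: k u => [|k IH] [|a u] //= sz /andP [ap au].
rewrite in_cons /=; apply: (allpairs_f (fun a u => a :: u)).
  by rewrite mem_iota.
exact: IH.
Qed.

Section Fac.
Variable B : Type.
Variable x : nat -> B.

Lemma Tfac_some w h u : Tfac p q x w h u <> None <-> (size u <= h)%N /\ inL p q (w ++ u).
Proof.
rewrite /Tfac; case: ifP => [/andP [a b]|/negbT]; first by split.
by rewrite negb_and => /orP [] /negbTE -> //; split => // [[]].
Qed.

Lemma Tfac_in_allw w h u : Tfac p q x w h u <> None -> u \in allw h.
Proof.
case/Tfac_some => sz /letters_inL; rewrite all_cat => /andP [_ au].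
exact: mem_allw.
Qed.

Lemma Tfac_rcons w a h u : Tfac p q x (rcons w a) h u = Tfac p q x w h.+1 (a :: u).
Proof. by rewrite /Tfac cat_rcons. Qed.

Lemma Tfac_mono w h1 h2 u : (size u <= h1)%N -> (size u <= h2)%N ->
  Tfac p q x w h1 u = Tfac p q x w h2 u.
Proof. by rewrite /Tfac => -> ->. Qed.

Lemma Tfac_root w h : inL p q w -> Tfac p q x w h [::] = Some (x (val_nat p q w)).
Proof. by rewrite /Tfac cats0 => ->. Qed.

End Fac.

Lemma delta_eq w w' u : inL p q (w ++ u) -> inL p q (w' ++ u) ->
  q ^ size u * val_nat p q (w ++ u) + p ^ size u * val_nat p q w'
  = q ^ size u * val_nat p q (w' ++ u) + p ^ size u * val_nat p q w.
Proof.
elim/last_ind: u => [|u a IH]; first by rewrite !cats0 /= !mul1n addnC.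
rewrite -!rcons_cat => h1 h2.
have e1 := val_child h1; have e2 := val_child h2.
have := IH (inL_rcons h1) (inL_rcons h2).
rewrite size_rcons !expnS => e.
rewrite (mulnC q (q ^ _)) -!mulnA e1 e2.
move: e; set A := val_nat p q (w ++ u); set A2 := val_nat p q (w' ++ u); set X := q ^ size u; set Y := p ^ size u => e.
nia.
Qed.


Hypothesis cop : coprime p q.

Lemma key_mod w w' c h u :
  size c = h.+1 -> inL p q (w ++ c) -> inL p q (w' ++ c) ->
  size u = h -> inL p q (w ++ u) -> inL p q (w' ++ u) ->
  val_nat p q (w ++ u) %% q = val_nat p q (w' ++ u) %% q.
Proof.
move=> sc c1 c2 su u1 u2.
have ec := delta_eq c1 c2; have eu := delta_eq u1 u2.
rewrite sc in ec; rewrite su in eu.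
move: ec eu.
set C := val_nat p q (w ++ c); set C' := val_nat p q (w' ++ c).
set A := val_nat p q (w ++ u); set A' := val_nat p q (w' ++ u).
set D := val_nat p q w; set D' := val_nat p q w'.
move=> /(congr1 Posz) ec /(congr1 Posz) eu.
rewrite !PoszD !PoszM in ec eu.
have ec2 : ((q ^ h.+1)%:Z * (C%:Z - C'%:Z) = (p ^ h.+1)%:Z * (D%:Z - D'%:Z))%R.
  rewrite !mulrBr; apply/eqP; rewrite subr_eq addrC addrA eq_sym subr_eq ec addrC. done.
have eu2 : ((q ^ h)%:Z * (A%:Z - A'%:Z) = (p ^ h)%:Z * (D%:Z - D'%:Z))%R.
  rewrite !mulrBr; apply/eqP; rewrite subr_eq addrC addrA eq_sym subr_eq eu addrC. done.
have cz : coprimez (q ^ h.+1)%:Z (p ^ h.+1)%:Z.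
  by rewrite coprimezE /= coprimeXl // coprimeXr // coprime_sym.
have : ((q ^ h.+1)%:Z %| ((p ^ h.+1)%:Z * (D%:Z - D'%:Z))%R)%Z by rewrite -ec2 dvdz_mulr.
rewrite Gauss_dvdzr // => /dvdzP [t et].
rewrite et in eu2.
have : (A%:Z - A'%:Z = (t * (p ^ h)%:Z) * q%:Z)%R.
  apply: (@mulfI _ (q ^ h)%:Z); first by rewrite eqz_nat expn_eq0 negb_and; apply/orP; left; rewrite -lt0n q_gt0.
  rewrite eu2 expnS PoszM. ring.
move=> e.
have : (A%:Z == A'%:Z %[mod q%:Z])%Z by rewrite eqz_mod_dvd e dvdz_mull.
by rewrite !modz_nat => /eqP [].
Qed.



Lemma val_nil : val_nat p q [::] = 0.
Proof. by rewrite /val_nat /valQ big_ord0. Qed.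

Lemma head_filter_min (P : pred nat) a n : (a < n)%N -> P a ->
  (forall b, (b < a)%N -> ~~ P b) -> head 0 [seq b <- iota 0 n | P b] = a.
Proof.
move=> an Pa nP.
rewrite -(subnKC (ltnW an)) iotaD filter_cat.
have -> : [seq b <- iota 0 a | P b] = [::].
  apply/eqP; rewrite -[X in is_true X]negbK -has_filter; apply/hasPn => b.
  by rewrite mem_iota add0n => /andP [_ ba]; apply: nP.
case e: (n - a) => [|k]; first by move: an; rewrite -subn_gt0 e.
by rewrite /= add0n Pa.
Qed.

Section Fin.
Variable B : finType.
Variable x : nat -> B.

Definition tab (w : seq nat) (k : nat) : (size (allw k)).-tuple (option B) :=
  map_tuple (Tfac p q x w k) (in_tuple (allw k)).

Lemma tab_eq w w' k : tab w k = tab w' k <-> forall u, Tfac p q x w k u = Tfac p q x w' k u.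
Proof.
split.
- move=> /(congr1 val) /= /eq_in_map e u.
  case: (boolP (u \in allw k)) => [/e //|nu].
  case e1 : (Tfac p q x w k u) => [b|]; first by move/negP: nu; case; apply: (Tfac_in_allw (x:=x) (w:=w)); rewrite e1.
  case e2 : (Tfac p q x w' k u) => [b|] //.
  by move/negP: nu; case; apply: (Tfac_in_allw (x:=x) (w:=w')); rewrite e2.
- by move=> e; apply: val_inj => /=; apply: eq_map.
Qed.

Lemma finf_bound k : exists N, forall n, (N <= n)%N -> Finf p q x k (Tfac p q x (rep p q n) k).
Proof.
suff : forall ts : seq ((size (allw k)).-tuple (option B)),
  exists N, forall t, t \in ts -> forall n, (N <= n)%N -> tab (rep p q n) k = t ->
    Finf p q x k (Tfac p q x (rep p q n) k).
  case/(_ (enum {: (size (allw k)).-tuple (option B)})) => N HN.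
  by exists N => n Nn; apply: (HN _ _ n Nn erefl); rewrite mem_enum.
elim=> [|t ts [N IH]]; first by exists 0.
case: (classic (exists n0, forall n, (n0 <= n)%N -> tab (rep p q n) k <> t)) => [[n0 Hn0]|nH].
- exists (maxn N n0) => t'; rewrite in_cons => /orP [/eqP ->|t'ts] n; rewrite geq_max => /andP [h1 h2].
    by move=> e; case: (Hn0 n h2 e).
  exact: IH.
- exists N => t'; rewrite in_cons => /orP [/eqP ->|t'ts] n Nn; last exact: IH.
  move=> et n1.
  case: (classic (exists n2, (n1 <= n2)%N /\ tab (rep p q n2) k = t)) => [[n2 [h1 h2]]|nn].
    by exists n2; split => //; apply/tab_eq; rewrite h2 et.
  case: nH; exists n1 => n2 h1 h2; apply: nn; eauto.
Qed.

End Fin.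



Section Core.
Variable B : finType.
Variable x : nat -> B.
Variable h : nat.
Hypothesis Hh : forall U : factor B, Finf p q x h U ->
     forall j : nat, (j < q)%N ->
     forall U1 U2 : factor B,
       Finf_a p q x h.+1 (wj0 p q j) U1 -> extends h U U1 ->
       Finf_a p q x h.+1 (wj0 p q j) U2 -> extends h U U2 ->
       factor_eq U1 U2.
Variable N' : nat.
Let N := N'.+1.
Hypothesis HN : forall n, (N <= n)%N ->
  Finf p q x h (Tfac p q x (rep p q n) h) /\ Finf p q x h.+1 (Tfac p q x (rep p q n) h.+1).

Definition long w := inL p q w /\ (N <= val_nat p q w)%N.

Notation T := (Tfac p q x).

Lemma long_ne w : long w -> w <> [::].
Proof. by case=> _ + e; rewrite e val_nil. Qed.

Lemma long_finf w : long w -> Finf p q x h (T w h) /\ Finf p q x h.+1 (T w h.+1).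
Proof.
case=> /inLP [n ->]; rewrite val_nat_rep; exact: HN.
Qed.

Lemma dom_half w w' c u :
  long w -> long w' -> (forall v, T w h v = T w' h v) ->
  size c = h.+1 -> inL p q (w ++ c) -> inL p q (w' ++ c) ->
  size u = h.+1 -> inL p q (w ++ u) -> inL p q (w' ++ u).
Proof.
move=> lw lw' e sc c1 c2 su.
case/lastP: u su => [//|u' a]; rewrite size_rcons => -[su'].
rewrite -!rcons_cat => hu.
have hu' := inL_rcons hu.
have hu'2 : inL p q (w' ++ u').
  have : T w h u' <> None by apply/Tfac_some; rewrite su'.
  by rewrite e => /Tfac_some [].
have km := key_mod sc c1 c2 su' hu' hu'2.
case/(inL_child a hu'): hu => ap dv _.
apply/(inL_child a hu'2); split => //.
  move: dv; rewrite /dvdn -modnDml -modnMmr km modnMmr modnDml; done.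
have := val_pos hu'2.
have ne : w' ++ u' <> [::] by case: w' lw' {e c2 hu'2 km} => [/long_ne|].
move/(_ ne) => pos.
by rewrite addn_gt0 muln_gt0 p_gt0 pos.
Qed.

Lemma rl_dom (U V : factor B) k r : (forall u, U u <> None <-> V u <> None) ->
  radix_least_h U k r -> radix_least_h V k r.
Proof.
move=> e [s [ne m]]; split => //; split; first by apply/e.
by move=> v sv /e; apply: m.
Qed.

Lemma Kext w w' c :
  long w -> long w' -> (forall v, T w h v = T w' h v) ->
  size c = h.+1 -> inL p q (w ++ c) -> inL p q (w' ++ c) ->
  forall u, T w h.+1 u = T w' h.+1 u.
Proof.
move=> lw lw' e sc c1 c2.
have dom : forall u, T w h.+1 u <> None <-> T w' h.+1 u <> None.
  move=> u; rewrite !Tfac_some; case: (ltngtP (size u) h.+1) => su.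
  - have H : T w h u <> None <-> T w' h u <> None by rewrite e.
    move: H; rewrite !Tfac_some -ltnS su => H.
    by split => -[_ hh]; split => //; apply H; split.
  - by split => -[].
  - split => -[_ hu]; split => //.
      exact: (dom_half lw lw' e sc c1 c2 su hu).
    by apply: (dom_half lw' lw _ sc c2 c1 su hu) => v; rewrite e.
set s := [seq v <- allw h.+1 | (size v == h.+1) && inL p q (w ++ v)].
have cs : c \in s.
  rewrite mem_filter sc eqxx c1; apply/andP; split => //; apply: mem_allw; first by rewrite sc.
  by move/letters_inL: c1; rewrite all_cat => /andP [].
have [r rs rmin] : exists2 r, r \in s & forall v, v \in s -> lexle r v.
  by apply: lex_min; case: s cs.
move: rs; rewrite mem_filter => /andP [/andP [/eqP sr rin] _].
have rl1 : radix_least_h (T w h.+1) h.+1 r.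
  split => //; split; first by apply/Tfac_some; rewrite sr.
  move=> v sv /Tfac_some [_ hv]; apply: rmin.
  rewrite mem_filter sv eqxx hv; apply/andP; split => //; apply: mem_allw; first by rewrite sv.
  by move/letters_inL: hv; rewrite all_cat => /andP [].
have rl2 := rl_dom dom rl1.
case/lastP: r sr rin rmin rl1 rl2 => [//|r' a] sr rin rmin rl1 rl2.
have rin2 : inL p q (rcons (w ++ r') a) by rewrite rcons_cat.
have hr' := inL_rcons rin2.
set j := val_nat p q (w ++ r') %% q.
have pos : (0 < val_nat p q (w ++ r'))%N.
  by apply: val_pos => //; case: w lw {e dom c1 rin rin2 hr' rl1 rl2 rmin s cs j} => [/long_ne|].
have modeq b : ((b + p * j) %% q == 0) = (q %| p * val_nat p q (w ++ r') + b).
  by rewrite /dvdn addnC -modnDml modnMmr modnDml.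
have wj : wj0 p q j = a.
  have [ap dv _] := (inL_child a hr').1 rin2.
  apply: head_filter_min => //; first by rewrite modeq.
  move=> b ba; rewrite modeq; apply/negP => dvb.
  have hb : inL p q (rcons (w ++ r') b).
    apply/(inL_child b hr'); split => //; first exact: ltn_trans ba ap.
    by rewrite addn_gt0 muln_gt0 p_gt0 pos.
  have memb : rcons r' b \in s.
    rewrite mem_filter; apply/andP; split.
      by rewrite /= size_rcons -(size_rcons r' a) sr eqxx rcons_cat in hb *; rewrite hb.
    apply: mem_allw; first by rewrite size_rcons -(size_rcons r' a) sr.
    by move/letters_inL: hb; rewrite rcons_cat all_cat => /andP [].
  by have := rmin _ memb; rewrite lexle_rcons leqNgt ba.
have jq : (j < q)%N by rewrite ltn_mod q_gt0.
have [f1 f1'] := long_finf lw; have [f2 f2'] := long_finf lw'.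
apply: (Hh f1 jq (U1 := T w h.+1) (U2 := T w' h.+1)).
- split => //; exists (rcons r' a); split => //; split; last by rewrite last_rcons wj.
  by case: r' {rmin sr rin rin2 rl1 rl2 hr' j pos modeq wj jq}.
- by move=> u su; apply: Tfac_mono => //; apply: leqW.
- split => //; exists (rcons r' a); split => //; split; last by rewrite last_rcons wj.
  by case: r' {rmin sr rin rin2 rl1 rl2 hr' j pos modeq wj jq}.
- by move=> u su; rewrite e; apply: Tfac_mono => //; apply: leqW.
Qed.

Definition Rel w w' := exists d, [/\ (d <= h)%N,
  (forall u, (size u <= d)%N -> T w h u = T w' h u) &
  (d = h \/ forall u, size u = d.+1 -> inL p q (w ++ u) -> inL p q (w' ++ u) -> False)].

Lemma T_big w k u : (k < size u)%N -> T w k u = None.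
Proof. by rewrite /Tfac ltnNge => /negbTE ->. Qed.

Lemma Rel_step w w' a : long w -> long w' -> Rel w w' ->
  inL p q (rcons w a) -> inL p q (rcons w' a) -> Rel (rcons w a) (rcons w' a).
Proof.
move=> lw lw' [d [dh eqd alt]] ha ha'.
have sh : forall k u, (size u <= k)%N -> (k < h)%N ->
    T (rcons w a) h u = T w h (a :: u) /\ T (rcons w' a) h u = T w' h (a :: u).
  move=> k u su kh; rewrite !Tfac_rcons; split; apply: Tfac_mono => /=; lia.
case: alt => [dH|nc].
- subst d.
  case: (classic (exists u, size u = h /\ inL p q (rcons w a ++ u) /\ inL p q (rcons w' a ++ u))) => [[u [su [u1 u2]]]|nu].
  + have eT : forall v, T w h v = T w' h v.
      move=> v; case: (leqP (size v) h) => sv; first exact: eqd.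
      by rewrite !T_big.
    rewrite !cat_rcons in u1 u2.
    have sc : size (a :: u) = h.+1 by rewrite /= su.
    have K := @Kext w w' (a :: u) lw lw' eT sc u1 u2.
    exists h; split => //; last by left.
    by move=> v sv; rewrite !Tfac_rcons K.
  + case: (posnP h) => [h0|hpos].
      by case: nu; exists [::]; rewrite !cats0 h0.
    exists h.-1; split; first exact: leq_pred.
      have hp : (h.-1 < h)%N by rewrite ltn_predL.
      move=> u su; have [-> ->] := sh h.-1 u su hp.
      by apply: eqd => /=; move: su hpos; clear; lia.
    by right => u su u1 u2; apply: nu; exists u; rewrite su prednK.
- case: d dh eqd nc => [|d] dh eqd nc.
    by case: (nc [:: a]); rewrite // cats1.
  exists d; split.
  + exact: ltnW.
  + move=> u su; have [-> ->] := sh d u su dh.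
    by apply: eqd; rewrite /= ltnS.
  + right => u su u1 u2; apply: (nc (a :: u)); rewrite /= ?su //; by rewrite -cat_rcons.
Qed.

Lemma Rel_tab w w' w'' : Rel w w' -> (forall u, T w' h u = T w'' h u) -> Rel w w''.
Proof.
move=> [d [dh eqd alt]] e; exists d; split => //.
  by move=> u su; rewrite -e; apply: eqd.
case: alt => [->|nc]; first by left.
case: (eqVneq d h) => [->|dne]; first by left.
right => u su u1 u2.
apply: (nc u su u1).
have : T w'' h u <> None by apply/Tfac_some; rewrite su; split => //; rewrite ltn_neqAle dne dh.
by rewrite -e => /Tfac_some [].
Qed.

Lemma Rel_root w w' : Rel w w' -> T w h [::] = T w' h [::].
Proof. by case=> d [_ eqd _]; apply: eqd. Qed.

Definition pb (P : Prop) : bool := if excluded_middle_informative P then true else false.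
Lemma pbP (P : Prop) : pb P <-> P.
Proof. by rewrite /pb; case: excluded_middle_informative. Qed.

Definition TT := ((size (allw h)).-tuple (option B)).

Definition stepS (SS : {set TT}) (a : nat) : {set TT} :=
  [set t' | pb (exists t, t \in SS /\ exists w', [/\ long w', tab x w' h = t,
     inL p q (rcons w' a) & tab x (rcons w' a) h = t'])].

Definition QQ := ('I_N + {set TT})%type.

Definition dlt (s : QQ) (a : nat) : QQ :=
  match s with
  | inl k => if ((p * k + a) %/ q < N)%N then inl (inord ((p * k + a) %/ q))
             else inr [set tab x (rep p q ((p * k + a) %/ q)) h]
  | inr SS => inr (stepS SS a)
  end.

Definition root (t : TT) : B := odflt (x 0) (nth None t (index [::] (allw h))).

Definition tau (s : QQ) : B :=
  match s with
  | inl k => x k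
  | inr SS => if [pick t in SS] is Some t then root t else x 0
  end.

Definition q0 : QQ := inl (inord 0).

Lemma root_tab w : inL p q w -> root (tab x w h) = x (val_nat p q w).
Proof.
move=> hw; have mem : [::] \in allw h by apply: mem_allw.
by rewrite /root /tab /= (nth_map [::]) ?index_mem // nth_index // Tfac_root.
Qed.

Definition Inv n (s : QQ) :=
  ((n < N)%N /\ s = inl (inord n)) \/
  ((N <= n)%N /\ exists SS, [/\ s = inr SS, tab x (rep p q n) h \in SS &
     forall t, t \in SS -> exists w', [/\ long w', tab x w' h = t & Rel (rep p q n) w']]).

Lemma long_rep n : (N <= n)%N -> long (rep p q n).
Proof. by move=> Nn; split; [apply: inL_rep | rewrite val_nat_rep]. Qed.

Lemma Rel_refl w : Rel w w.
Proof. by exists h; split => //; left. Qed.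

Lemma inv n : Inv n (foldl dlt q0 (rep p q n)).
Proof.
elim: n {-2}n (leqnn n) => [|M IH] n.
  by rewrite leqn0 => /eqP ->; left.
case: n => [|n] hn; first by left.
set k := q * n.+1 %/ p; set a := q * n.+1 %% p.
have ek : rep p q n.+1 = rcons (rep p q k) a by rewrite repS.
have kn : (k < n.+1)%N by rewrite ltn_divLR ?p_gt0 // mulnC ltn_pmul2l.
have qn : p * k + a = q * n.+1 by rewrite mulnC /k /a -divn_eq.
rewrite ek foldl_rcons.
have kM : (k <= M)%N by rewrite -ltnS; apply: leq_trans kn hn.
case: (IH k kM) => [[kN e]|[Nk [SS [e tS hS]]]].
- rewrite e /= inordK // qn mulKn ?q_gt0 //.
  case: ltnP => nN; first by left; split.
  right; split => //; exists [set tab x (rep p q n.+1) h]; split => //; first by rewrite set11.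
  move=> t; rewrite inE => /eqP ->; exists (rep p q n.+1); split => //; last by apply: Rel_refl.
  exact: long_rep.
- rewrite e /=; right; split; first exact: leq_trans Nk (ltnW kn).
  have hkn : inL p q (rcons (rep p q k) a) by rewrite -ek; apply: inL_rep.
  exists (stepS SS a); split => //.
    rewrite inE; apply/pbP; exists (tab x (rep p q k) h); split => //.
    exists (rep p q k); split => //; [exact: long_rep Nk | by rewrite ek].
  move=> t'; rewrite inE => /pbP [t [tS' [w1 [lw1 et ha1 et']]]].
  have [w0 [lw0 et0 R0]] := hS t tS'.
  have R1 : Rel (rep p q k) w1 by apply: (Rel_tab R0); apply/tab_eq; rewrite et0 et.
  have R2 := Rel_step (long_rep Nk) lw1 R1 hkn ha1.
  exists (rcons w1 a); split => //; last by rewrite ek.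
  split => //; case: lw1 => _ Nw1.
  have pos : (0 < val_nat p q w1)%N by apply: leq_trans Nw1.
  exact: leq_trans Nw1 (ltnW (val_child_gt ha1 pos)).
Qed.

Lemma tau_ok n : x n = tau (foldl dlt q0 (rep p q n)).
Proof.
case: (inv n) => [[nN ->]|[Nn [SS [-> tS hS]]]] /=; first by rewrite inordK.
case: pickP => [t tS'|none]; last by have := none (tab x (rep p q n) h); rewrite tS.
have [w' [lw' <- R]] := hS t tS'.
rewrite root_tab; last by case: lw'.
have := Rel_root R; rewrite !Tfac_root ?inL_rep //; last by case: lw'.
by rewrite val_nat_rep => -[].
Qed.

End Core.

End Lang.

Unset Implicit Arguments.

Theorem mainTheorem12 (p q : nat) (B : finType) (x : nat -> B) :
  (1 < q)%N -> (q < p)%N -> coprime p q ->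
  (exists h : nat,
     forall U : factor B, Finf p q x h U ->
     forall j : nat, (j < q)%N ->
     forall U1 U2 : factor B,
       Finf_a p q x h.+1 (wj0 p q j) U1 -> extends h U U1 ->
       Finf_a p q x h.+1 (wj0 p q j) U2 -> extends h U U2 ->
       factor_eq U1 U2) ->
  automatic p q x.
Proof.
move=> hq hqp cop [h Hh].
have [N1 H1] := finf_bound hq hqp x h.
have [N2 H2] := finf_bound hq hqp x h.+1.
have HN : forall n, ((maxn N1 N2).+1 <= n)%N ->
  Finf p q x h (Tfac p q x (rep p q n) h) /\ Finf p q x h.+1 (Tfac p q x (rep p q n) h.+1).
  move=> n; rewrite ltnNge leq_max negb_or -!ltnNge => /andP [a b].
  by split; [apply: H1; apply: ltnW | apply: H2; apply: ltnW].
exists ('I_(maxn N1 N2).+1 + {set (size (allw p h)).-tuple (option B)})%type.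
exists (q0 p B h (maxn N1 N2)), (@dlt p q B x h (maxn N1 N2)), (@tau p B x h (maxn N1 N2)).
exact: (tau_ok hq hqp cop Hh HN).
Qed.
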